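(* Let $\mu\in[-1/3,0]$ and $P\in[0,1]$, and for $\Gamma\in[0,1)$ set \[ B_G^{(2)}(\Gamma):=[-4\Gamma P+2P-2\Gamma+3]+\mu[3-2\Gamma-4P]. \] Then there exists a real number $c<1/2$ such that $B_G^{(2)}(\Gamma)<0$ for every $\Gamma\in[0,1)$ with $\Gamma-\tfrac12>c$, if and only if \[ 1-P<\frac{1+3\mu}{2+4\mu}. \]
   Context: In the application, $\Gamma=\Gamma(k)$ is the fraction of the potential enstrophy spectrum at wavenumber $k$ contained in the upper layer, $P=P(k)$ is the fraction of the energy spectrum at $k$ that is baroclinic, and $\mu\in[-1/3,0]$ is the Ekman extrapolation parameter; $B_G^{(2)}$ is a coefficient in the potential enstrophy dissipation rate spectrum of the asymmetric Ekman term. *)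

(* Defs.v *)
From Stdlib Require Import Reals Lra.
Open Scope R_scope.

Definition BG2 (mu P Gamma : R) : R :=
  (- 4 * Gamma * P + 2 * P - 2 * Gamma + 3) + mu * (3 - 2 * Gamma - 4 * P).

(* Main.v *)
Require Import Defs.
From Stdlib Require Import Reals Lra Psatz.
Open Scope R_scope.

Theorem proposition6 (mu P : R) :
  -1/3 <= mu <= 0 -> 0 <= P <= 1 ->
  ((exists c : R, c < 1/2 /\
      forall Gamma : R, 0 <= Gamma < 1 -> Gamma - 1/2 > c -> BG2 mu P Gamma < 0)
   <-> 1 - P < (1 + 3 * mu) / (2 + 4 * mu)).
Proof.
  intros Hmu HP.
  assert (Hb : 2 + 4 * mu > 0) by lra.
  set (q := (1 + 3 * mu) / (2 + 4 * mu)).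
  assert (Hq : q * (2 + 4 * mu) = 1 + 3 * mu) by (unfold q; field; lra).
  assert (Heq : 1 - P < q <-> 1 - 2*P + mu*(1 - 4*P) < 0).
  { split; intro H; nra. }
  rewrite Heq. clear Heq Hq q.
  set (k := 4*P + 2 + 2*mu).
  assert (Hk : k > 0) by (unfold k; lra).
  assert (HB : forall G, BG2 mu P G = (1 - 2*P + mu*(1 - 4*P)) + (1 - G) * k)
    by (intro G; unfold BG2, k; ring).
  split.
  - intros [c [Hc H]].
    destruct (Rle_dec (c + 1/2) 0) as [Hn|Hn].
    + specialize (H (1/2)). rewrite HB in H.
      assert (X : (1 - 2*P + mu*(1 - 4*P)) + (1 - 1/2) * k < 0) by (apply H; lra).
      nra.
    + specialize (H ((c + 1/2 + 1)/2)). rewrite HB in H.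
      assert (X : (1 - 2*P + mu*(1 - 4*P)) + (1 - (c + 1/2 + 1)/2) * k < 0) by (apply H; lra).
      nra.
  - intro H1.
    set (b := 1 - 2*P + mu*(1 - 4*P)) in *.
    set (d := - b / k).
    assert (Hd : d * k = - b) by (unfold d; field; lra).
    assert (Hd0 : d > 0).
    { unfold d. apply Rmult_lt_0_compat; [lra | apply Rinv_0_lt_compat; lra]. }
    exists (1/2 - d). split; [lra|].
    intros G HG HG2. rewrite HB. fold b. nra.
Qed.
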